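(* Let $(M,K,\Sigma,\underline{f},V)$ and $(M',K',\Sigma',\underline{f}',V')$ be $\mathbb{Q}$SK-systems, $\xi:\mathcal{A}(K)\to\mathcal{A}(K')$ an isomorphism preserving the Blanchfield form, and $\underline b=(b_i)_{1\le i\le2g}$, $\underline b'=(b'_i)_{1\le i\le 2g}$ generating families of $\mathcal{A}(K)$, $\mathcal{A}(K')$ associated with $V$, $V'$. If $V$ and $V'$ are invertible, then $\underline b$ and $\underline b'$ are $\mathbb{Q}$-bases of $\mathcal{A}(K)$ and $\mathcal{A}(K')$, and the matrix $P$ of $\xi$ in these bases (i.e. $\xi(b_i)=\sum_kP_{ki}b'_k$) is symplectic and satisfies $V'=PVP^t$.
   Context: $\mathbb{Q}$SK-pair $(M,K)$: a rational homology 3-sphere $M$ and a knot $K$ trivial in $H_1(M;\mathbb{Z})$. $\tilde X$: the infinite cyclic covering of the exterior of $K$, deck generator $\tau$ acting as $t$; $\mathcal{A}(K)=H_1(\tilde X;\mathbb{Q})$. Blanchfield form $\phi_K([J_1],[J_2])=lk_e(J_1,J_2)\bmod\mathbb{Q}[t^{\pm1}]$, $lk_e(J_1,J_2)=\frac{1}{\delta(t)\delta(t^{-1})}\sum_k lk(\delta(\tau)J_1,\tau^k(\delta(\tau)J_2))t^k$ ($J_1\cap\tau^kJ_2=\emptyset$, $\delta$ the annihilator). Preserving: $\phi_{K'}(\xi a,\xi b)=\phi_K(a,b)$. $J$: $2g\times2g$ block-diagonal with blocks $\begin{pmatrix}0&-1\\1&0\end{pmatrix}$; $P$ symplectic means $PJP^t=J$.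 $\mathbb{Q}$SK-system $(M,K,\Sigma,\underline f,V)$: Seifert surface $\Sigma$ of genus $g$, basis $(f_i)$ of $H_1(\Sigma;\mathbb{Z})$ with intersection matrix $-J$, $V_{ij}=lk(f_i,f_j^+)$, so $V-V^t=J$. Associated generators $(b_i)$: lifts to $\tilde X$ (in one copy of $M\setminus\Sigma$) of meridians of the $f_i$; they generate $\mathcal{A}(K)$ subject to relations $\sum_i(tV-V^t)_{ij}b_i$, and $\phi_K(b_i,b_k)=(1-t)((tV-V^t)^{-1})_{ki}\bmod\mathbb{Q}[t^{\pm1}]$. *)

(* Defs.v *)
From HB Require Import structures.
From mathcomp Require Import all_boot all_order all_algebra.
From mathcomp Require Import fraction.
Import FracField.
Set Implicit Arguments. Unset Strict Implicit. Unset Printing Implicit Defensive.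
Import Order.TTheory GRing.Theory Num.Theory.
Local Open Scope ring_scope.

(* Field of fractions Q(t) of Q[t]; Q[t^{+-1}] sits inside it. *)
Notation Qt := {fraction {poly rat}}.
Definition polyF (p : {poly rat}) : Qt := tofrac p.
Definition tF : Qt := polyF 'X.
Definition ratF (r : rat) : Qt := polyF r%:P.

Definition isLaurent (x : Qt) : Prop :=
  exists (p : {poly rat}) (n : nat), x = polyF p / polyF ('X^n).

Definition eqmodL (x y : Qt) : Prop := isLaurent (x - y).

(* the 2g x 2g block-diagonal matrix with blocks [[0,-1],[1,0]] *)
Definition Jmx (g : nat) : 'M[rat]_(2 * g) :=
  \matrix_(i, j)
    if ~~ odd i && (nat_of_ord j == (nat_of_ord i).+1) then -1
    else if odd i && ((nat_of_ord j).+1 == nat_of_ord i) then 1 else 0.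

Definition symplectic (g : nat) (P : 'M[rat]_(2 * g)) : Prop :=
  P *m Jmx g *m P^T = Jmx g.

Definition peval (A : lmodType rat) (t : A -> A) (p : {poly rat}) (a : A) : A :=
  \sum_(i < size p) p`_i *: iter i t a.

(* The Q[t^{+-1}]-module (A, t) (t invertible with inverse tinv) is generated by
   b_1..b_2g subject exactly to the relations sum_i (tV - V^t)_{ij} b_i (j = 1..2g). *)
Definition alex_presentation (g : nat) (V : 'M[rat]_(2 * g))
    (A : lmodType rat) (t : {linear A -> A}) (tinv : A -> A) (b : 'I_(2 * g) -> A) : Prop :=
  [/\ (forall a, t (tinv a) = a), (forall a, tinv (t a) = a),
      (forall a, exists (c : 'I_(2 * g) -> {poly rat}) (n : nat),
          a = iter n tinv (\sum_i peval t (c i) (b i))) &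
      (forall c : 'I_(2 * g) -> {poly rat},
          \sum_i peval t (c i) (b i) = 0 <->
          exists (m : nat) (d : 'I_(2 * g) -> {poly rat}),
            forall i, 'X^m * c i = \sum_j (V i j *: 'X - (V j i)%:P) * d j)].

Definition seifert_presF (g : nat) (V : 'M[rat]_(2 * g)) : 'M[Qt]_(2 * g) :=
  \matrix_(i, j) (tF * ratF (V i j) - ratF (V j i)).

(* phi is a Blanchfield-type form (values in Q(t)/Q[t^{+-1}]) on (A,t):
   sesquilinear (Q-bilinear, phi(ta,c) = t phi(a,c), phi(a,tc) = t^-1 phi(a,c))
   modulo Q[t^{+-1}], with phi(b_i,b_k) = (1-t)((tV-V^t)^{-1})_{ki}. *)
Definition blanchfield_on_gens (g : nat) (V : 'M[rat]_(2 * g))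
    (A : lmodType rat) (t : {linear A -> A}) (b : 'I_(2 * g) -> A)
    (phi : A -> A -> Qt) : Prop :=
  [/\ (forall a1 a2 c, eqmodL (phi (a1 + a2) c) (phi a1 c + phi a2 c)),
      (forall r a c, eqmodL (phi (r *: a) c) (ratF r * phi a c)) &
      (forall a c, eqmodL (phi (t a) c) (tF * phi a c))] /\
  [/\ (forall a c1 c2, eqmodL (phi a (c1 + c2)) (phi a c1 + phi a c2)),
      (forall r a c, eqmodL (phi a (r *: c)) (ratF r * phi a c)),
      (forall a c, eqmodL (phi a (t c)) (tF^-1 * phi a c)) &
      (forall i k, eqmodL (phi (b i) (b k))
                          ((1 - tF) * invmx (seifert_presF V) k i))].

Definition is_Qbasis (A : lmodType rat) (n : nat) (b : 'I_n -> A) : Prop :=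
  (forall c : 'I_n -> rat, \sum_i c i *: b i = 0 -> forall i, c i = 0) /\
  (forall a, exists c : 'I_n -> rat, a = \sum_i c i *: b i).

(* Main.v *)
Require Import Defs.
From HB Require Import structures.
From mathcomp Require Import all_boot all_order all_algebra fraction.
Import Order.TTheory GRing.Theory Num.Theory.
Local Open Scope ring_scope.
Set Implicit Arguments. Unset Strict Implicit.
Lemma DEG (p n : nat) (S : 'M[rat]_n) (W : 'M[rat]_(p, n)) (R : 'M[{poly rat}]_(p, n)) :
  map_mx polyC W = R *m char_poly_mx S -> R = 0.
Proof.
move=> h.
have he k i : R k i * 'X = (W k i)%:P + \sum_l R k l * (S l i)%:P.
  move/matrixP: (h) => /(_ k i).
  rewrite /char_poly_mx mulmxBr mul_mx_scalar !mxE => ->.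
  rewrite (eq_bigr (fun l => R k l * (S l i)%:P)); last by move=> l _; rewrite mxE.
  by rewrite subrK mulrC.
pose s := (\max_(kl : 'I_p * 'I_n) size (R kl.1 kl.2))%N.
have hs kl : (size (R kl.1 kl.2) <= s)%N by apply: (leq_bigmax kl).
suff s0 : s = 0%N.
  apply/matrixP => k i; rewrite mxE; apply/eqP; rewrite -size_poly_eq0 -leqn0.
  by rewrite -s0 (hs (k, i)).
apply/eqP; rewrite -leqn0; apply/negPn/negP; rewrite -ltnNge => s_gt0.
suff : (s <= s.-1)%N by case: (s) s_gt0 => // s' _; rewrite ltnn.
apply/bigmax_leqP => [[k i]] _ /=.
have [->|nz] := eqVneq (R k i) 0; first by rewrite size_poly0.
rewrite -ltnS prednK // -(size_mulX nz) he.
apply: (leq_trans (size_polyD _ _)); rewrite geq_max; apply/andP; split.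
  by apply: (leq_trans (size_polyC_leq1 _)).
apply: (leq_trans (size_sum _ _ _)); apply/bigmax_leqP => l _.
apply: (leq_trans (size_polyMleq _ _)).
apply: (leq_trans _ (hs (k, l))) => /=.
have := size_polyC_leq1 (S l i).
case: (size (S l i)%:P) => [|[|//]] _; rewrite ?addn0 ?addn1 //=.
exact: leq_pred.
Qed.

Lemma GEN (p n : nat) (S : 'M[rat]_n) (W : 'M[rat]_(p, n)) :
  (forall k i, char_poly S %| (map_mx polyC W *m \adj (char_poly_mx S)) k i) -> W = 0.
Proof.
move=> hd.
set chi := char_poly S; set Q := _ *m _ in hd.
pose R := map_mx (fun q => q %/ chi) Q.
have hQ : Q = chi *: R.
  apply/matrixP => k i; rewrite [RHS]mxE [X in _ * X]mxE divpKC //.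
have chi0 : chi != 0 by rewrite monic_neq0 // char_poly_monic.
have h1 : chi *: map_mx polyC W = chi *: (R *m char_poly_mx S).
  rewrite scalemxAl -hQ /Q -mulmxA mul_adj_mx.
  by rewrite mul_mx_scalar.
have h2 : map_mx polyC W = R *m char_poly_mx S.
  apply/matrixP => k i; move/matrixP: (h1) => /(_ k i).
  by rewrite !mxE => /(mulfI chi0).
have R0 := DEG h2.
apply/matrixP => k i; move/matrixP: (h2) => /(_ k i).
by rewrite R0 mul0mx !mxE => /eqP; rewrite polyC_eq0 => /eqP.
Qed.
Lemma char_poly_horner n (S : 'M[rat]_n) a : (char_poly S).[a] = \det (a%:M - S).
Proof.
rewrite /char_poly -horner_evalE -det_map_mx; congr (\det _).
apply/matrixP => i j; rewrite !mxE /= rmorphB rmorphMn /= !horner_evalE hornerX hornerC.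
by [].
Qed.

Lemma cop0 n (S : 'M[rat]_n) m : S \in unitmx -> coprimep (char_poly S) ('X^m).
Proof.
move=> hS; apply: coprimep_expr; rewrite coprimepX rootE char_poly_horner.
rewrite raddf0 sub0r -scaleN1r detZ mulf_neq0 ?expf_neq0 ?oppr_eq0 ?oner_eq0 //.
Qed.

Lemma cop1 n (S : 'M[rat]_n) : (1%:M - S) \in unitmx -> coprimep (char_poly S) ('X - 1%:P).
Proof.
move=> hS; rewrite coprimep_XsubC rootE char_poly_horner.
by rewrite unitmxE unitfE in hS.
Qed.
Lemma XnF_neq0 n : polyF ('X^n) != 0.
Proof. by rewrite /polyF tofrac_eq0 monic_neq0 ?monicXn. Qed.

Lemma L_poly p : isLaurent (polyF p).
Proof. exists p, 0%N; by rewrite expr0 /polyF tofrac1 divr1. Qed.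

Lemma L0 : isLaurent 0.
Proof. by rewrite -(rmorph0 (@tofrac _)); apply: L_poly. Qed.

Lemma LD x y : isLaurent x -> isLaurent y -> isLaurent (x + y).
Proof.
move=> [p [n ->]] [q [m ->]].
exists (p * 'X^m + q * 'X^n), (n + m)%N.
have h1 := XnF_neq0 n; have h2 := XnF_neq0 m.
rewrite (addf_div (polyF p) (polyF q) h1 h2).
congr (_ / _); first by rewrite /polyF tofracD !tofracM.
by rewrite /polyF exprD tofracM mulrC.
Qed.

Lemma LM x y : isLaurent x -> isLaurent y -> isLaurent (x * y).
Proof.
move=> [p [n ->]] [q [m ->]].
exists (p * q), (n + m)%N.
have h1 := XnF_neq0 n; have h2 := XnF_neq0 m.
rewrite (mulf_div (polyF p) (polyF 'X^n) (polyF q) (polyF 'X^m)).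
by congr (_ / _); rewrite /polyF ?exprD tofracM.
Qed.

Lemma LN x : isLaurent x -> isLaurent (- x).
Proof.
move=> [p [n ->]]; exists (- p), n.
by rewrite /polyF tofracN mulNr.
Qed.

Lemma LtinV : isLaurent tF^-1.
Proof. exists 1, 1%N; by rewrite /tF /polyF tofrac1 expr1 div1r. Qed.

Lemma LrF r : isLaurent (ratF r).
Proof. exact: L_poly. Qed.

Lemma LtF : isLaurent tF.
Proof. exact: L_poly. Qed.

Lemma L_sum (I : Type) (r : seq I) (P : pred I) (F : I -> Qt) :
  (forall i, P i -> isLaurent (F i)) -> isLaurent (\sum_(i <- r | P i) F i).
Proof.
move=> h; elim/big_rec: _ => [|i x Pi hx]; first exact: L0.
exact: LD (h _ Pi) hx.
Qed.

Lemma eqm_refl x : eqmodL x x.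
Proof. by rewrite /eqmodL subrr; apply: L0. Qed.
Lemma eqm_sym x y : eqmodL x y -> eqmodL y x.
Proof. by rewrite /eqmodL => /LN; rewrite opprB. Qed.
Lemma eqm_trans x y z : eqmodL x y -> eqmodL y z -> eqmodL x z.
Proof.
rewrite /eqmodL => h1 h2; have := LD h1 h2.
by rewrite addrA subrK.
Qed.
Lemma eqmD x1 y1 x2 y2 : eqmodL x1 y1 -> eqmodL x2 y2 -> eqmodL (x1 + x2) (y1 + y2).
Proof.
rewrite /eqmodL => h1 h2; have := LD h1 h2.
by rewrite opprD addrACA.
Qed.
Lemma eqmM c x y : isLaurent c -> eqmodL x y -> eqmodL (c * x) (c * y).
Proof. rewrite /eqmodL -mulrBr; exact: LM. Qed.
Lemma eqm_sum (I : Type) (r : seq I) (P : pred I) (F G : I -> Qt) :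
  (forall i, P i -> eqmodL (F i) (G i)) ->
  eqmodL (\sum_(i <- r | P i) F i) (\sum_(i <- r | P i) G i).
Proof.
move=> h; elim/big_rec2: _ => [|i x y Pi hx]; first exact: eqm_refl.
exact: eqmD (h _ Pi) hx.
Qed.

Definition rF : rat -> Qt := (@tofrac _ \o @polyC rat).
Notation pm := (map_mx (@tofrac {poly rat})).

Lemma rF_pm m n (A : 'M[rat]_(m, n)) : map_mx rF A = pm (map_mx polyC A).
Proof. by rewrite map_mx_comp. Qed.

Lemma char_polyF_unit n (S : 'M[rat]_n) : pm (char_poly_mx S) \in unitmx.
Proof.
rewrite unitmxE det_map_mx unitfE tofrac_eq0.
by rewrite monic_neq0 // char_poly_monic.
Qed.

Lemma FINAL n (S W : 'M[rat]_n) : S \in unitmx -> (1%:M - S) \in unitmx ->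
  (forall k i, isLaurent (((1 - tF) *: map_mx rF W *m invmx (pm (char_poly_mx S))) k i)) ->
  W = 0.
Proof.
move=> hS hS1 hL; apply: (GEN (S := S)) => k i.
set Q := _ *m _.
have chi0 : char_poly S != 0 by rewrite monic_neq0 // char_poly_monic.
have chiF0 : polyF (char_poly S) != 0 by rewrite /polyF tofrac_eq0.
have hinv : invmx (pm (char_poly_mx S)) = (polyF (char_poly S))^-1 *: pm (\adj (char_poly_mx S)).
  by rewrite /invmx char_polyF_unit det_map_mx map_mx_adj.
have := hL k i; rewrite hinv rF_pm -scalemxAr scalemxAl scalerA -scalemxAl -map_mxM -/Q mxE.
rewrite mxE => -[p [m hpm]].
have e1 : polyF ((1 - 'X) * Q k i) / polyF (char_poly S) = polyF p / polyF 'X^m.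
  rewrite -hpm /polyF tofracM tofracB tofrac1 -/tF.
  by rewrite mulrC mulrA.
move/eqP: e1; rewrite (eqr_div _ _ chiF0 (XnF_neq0 m)).
rewrite /polyF -(tofracM ((1 - 'X) * Q k i) ('X^m)) -(tofracM p (char_poly S)).
rewrite tofrac_eq => /eqP e2.
have e3 : ('X^m * ('X - 1)) * Q k i = (- p) * char_poly S.
  rewrite mulNr -e2 -mulNr -mulNr opprB [RHS]mulrAC; congr (_ * _); exact: mulrC.
have cop : coprimep (char_poly S) ('X^m * ('X - 1)).
  by rewrite coprimepMr (cop0 _ hS) -polyC1 (cop1 hS1).
by rewrite -(Gauss_dvdpr _ cop) e3 dvdp_mull.
Qed.

Definition inspan (A : lmodType rat) n (b : 'I_n -> A) a :=
  exists c : 'I_n -> rat, a = \sum_i c i *: b i.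

Lemma span_add (A : lmodType rat) n (b : 'I_n -> A) x y :
  inspan b x -> inspan b y -> inspan b (x + y).
Proof.
move=> [c ->] [d ->]; exists (fun i => c i + d i).
by rewrite -big_split; apply: eq_bigr => i _; rewrite scalerDl.
Qed.

Lemma span_scale (A : lmodType rat) n (b : 'I_n -> A) r x :
  inspan b x -> inspan b (r *: x).
Proof.
move=> [c ->]; exists (fun i => r * c i).
by rewrite scaler_sumr; apply: eq_bigr => i _; rewrite scalerA.
Qed.

Lemma span_0 (A : lmodType rat) n (b : 'I_n -> A) : inspan b 0.
Proof. by exists (fun _ => 0); rewrite big1 // => i _; rewrite scale0r. Qed.

Lemma span_sum (A : lmodType rat) n (b : 'I_n -> A) (I : Type) (r : seq I) (P : pred I) F :
  (forall i, P i -> inspan b (F i)) -> inspan b (\sum_(i <- r | P i) F i).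
Proof.
move=> h; elim/big_rec: _ => [|i x Pi hx]; first exact: span_0.
exact: span_add (h _ Pi) hx.
Qed.

Lemma span_b (A : lmodType rat) n (b : 'I_n -> A) k : inspan b (b k).
Proof.
exists (fun i => (i == k)%:R); rewrite (bigD1 k) //= eqxx scale1r big1 ?addr0 //.
by move=> i /negbTE ->; rewrite scale0r.
Qed.

Lemma mx_comb (A : lmodType rat) n m p (X : 'M[rat]_(n, m)) (Y : 'M[rat]_(m, p))
   (v : 'I_n -> A) k :
  \sum_l (X *m Y) l k *: v l = \sum_j Y j k *: \sum_l X l j *: v l.
Proof.
under eq_bigr do rewrite mxE scaler_suml.
rewrite exchange_big /=; apply: eq_bigr => j _.
by rewrite scaler_sumr; apply: eq_bigr => l _; rewrite scalerA mulrC.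
Qed.

Lemma sum_delta (A : lmodType rat) n (v : 'I_n -> A) k :
  \sum_l (1%:M : 'M[rat]_n) l k *: v l = v k.
Proof.
rewrite (bigD1 k) //= mxE eqxx scale1r big1 ?addr0 //.
by move=> i /negbTE hi; rewrite mxE hi scale0r.
Qed.

Lemma peval_pad (A : lmodType rat) (t : A -> A) (p : {poly rat}) (a : A) k : (size p <= k)%N ->
  peval t p a = \sum_(i < k) p`_i *: iter i t a.
Proof.
move=> hk; rewrite /peval (big_ord_widen k (fun i => p`_i *: iter i t a) hk).
rewrite big_mkcond /=; apply: eq_bigr => i _.
by case: ifP => // /negbT; rewrite -leqNgt => /(nth_default 0) ->; rewrite scale0r.
Qed.

Lemma peval_C (A : lmodType rat) (t : A -> A) c a : peval t c%:P a = c *: a.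
Proof.
rewrite (@peval_pad _ _ _ _ 1%N) ?size_polyC_leq1 //.
by rewrite big_ord1 coefC.
Qed.

Lemma peval_lin1 (A : lmodType rat) (t : A -> A) u v a :
  peval t (u *: 'X - v%:P) a = u *: t a - v *: a.
Proof.
rewrite (@peval_pad _ _ _ _ 2%N); last first.
  apply: (leq_trans (size_polyD _ _)); rewrite geq_max size_polyN.
  rewrite (leq_trans (size_polyC_leq1 _)) // andbT.
  by rewrite (leq_trans (size_scale_leq _ _)) // size_polyX.
rewrite big_ord_recr big_ord1 /= !coefB !coefZ !coefC !coefX /=.
by rewrite mulr0 sub0r mulr1 subr0 scaleNr addrC.
Qed.

Lemma BASIS g (V : 'M[rat]_(2 * g)) (A : lmodType rat) (t : {linear A -> A}) tinv b :
  V \in unitmx -> alex_presentation V t tinv b ->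
  is_Qbasis b /\ (forall k, t (b k) = \sum_l (V^T *m invmx V) l k *: b l).
Proof.
move=> hV [tK tinvK gen rel].
have relj j : \sum_i V i j *: t (b i) = \sum_i V j i *: b i.
  have : \sum_i peval t (V i j *: 'X - (V j i)%:P) (b i) = 0.
    apply/(rel (fun i => V i j *: 'X - (V j i)%:P)).
    exists 0%N, (fun l => (l == j)%:R) => i.
    rewrite expr0 mul1r (bigD1 j) //= eqxx mulr1 big1 ?addr0 //.
    by move=> l /negbTE ->; rewrite mulr0.
  under eq_bigr do rewrite peval_lin1.
  by rewrite sumrB => /eqP; rewrite subr_eq0 => /eqP.
set T := V^T *m invmx V.
have tb k : t (b k) = \sum_l T l k *: b l.
  rewrite mx_comb.
  have e j : \sum_l V^T l j *: b l = \sum_i V i j *: t (b i).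
    by rewrite relj; apply: eq_bigr => l _; rewrite mxE.
  under eq_bigr do rewrite e.
  by rewrite -(mx_comb V (invmx V) (fun i => t (b i))) mulmxV // sum_delta.
have Tu : T \in unitmx by rewrite unitmx_mul unitmx_tr unitmx_inv hV.
split => //; split.
  move=> c hc.
  have := (rel (fun i => (c i)%:P)).1.
  under eq_bigr do rewrite peval_C.
  move=> /(_ hc) [m [d hd]].
  pose crow : 'M[rat]_(1, 2 * g) := \row_i c i.
  suff h0 : crow = 0 by move=> i; move/matrixP: h0 => /(_ 0 i); rewrite !mxE.
  apply: (GEN (S := T^T)) => k i.
  pose E := \row_l d l *m map_mx polyC V^T.
  have TV : T *m V = V^T by rewrite /T mulmxKV.
  have hE : 'X^m *: map_mx polyC crow = E *m char_poly_mx T^T.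
    rewrite /E -mulmxA /char_poly_mx mulmxBr mul_mx_scalar -map_mxM -trmx_mul TV trmxK.
    apply/matrixP => z j; rewrite (ord1 z) !mxE hd.
    apply: eq_bigr => l _; rewrite !mxE [LHS]mulrC.
    by congr (_ * (_ - _)); rewrite -mul_polyC mulrC.
  have hQ : 'X^m *: (map_mx polyC crow *m \adj (char_poly_mx T^T)) =
            char_poly T^T *: E.
    by rewrite scalemxAl hE -mulmxA mul_mx_adj mul_mx_scalar.
  move/matrixP: hQ => /(_ k i); rewrite [LHS]mxE [RHS]mxE => e.
  have TTu : T^T \in unitmx by rewrite unitmx_tr.
  by rewrite -(Gauss_dvdpr _ (cop0 m TTu)) e dvdp_mulIl.
have spt x : inspan b x -> inspan b (t x).
  move=> [c ->]; rewrite linear_sum; apply: span_sum => i _.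
  rewrite linearZ; apply: span_scale; rewrite tb; apply: span_sum => l _.
  exact/span_scale/span_b.
pose y j := \sum_k invmx T k j *: b k.
have ty j : t (y j) = b j.
  rewrite /y linear_sum; under eq_bigr do rewrite linearZ tb.
  by rewrite -mx_comb mulmxV // sum_delta.
have spinv x : inspan b x -> inspan b (tinv x).
  move=> [c ->].
  have -> : \sum_i c i *: b i = t (\sum_i c i *: y i).
    by rewrite linear_sum; apply: eq_bigr => i _; rewrite linearZ ty.
  rewrite tinvK; apply: span_sum => i _; apply: span_scale.
  by apply: span_sum => k _; exact/span_scale/span_b.
have spiter (f : A -> A) m x : (forall z, inspan b z -> inspan b (f z)) ->
    inspan b x -> inspan b (iter m f x).
  by move=> hf hx; elim: m => //= m IH; apply: hf.
move=> a; have [c [m ->]] := gen a.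
apply: (spiter) => //; apply: span_sum => i _; rewrite /peval.
apply: span_sum => j _; apply: span_scale; apply: (spiter) => //.
exact: span_b.
Qed.

Definition partner (i : nat) : nat := if odd i then i.-1 else i.+1.
Definition sgnJ (i : nat) : rat := if odd i then 1 else -1.

Lemma JE g (i j : 'I_(2 * g)) : Jmx g i j = if val j == partner i then sgnJ i else 0.
Proof.
rewrite /Jmx mxE /partner /sgnJ; case: i => [[|i']] hi /=.
  by case: (val j == 1)%N.
case: (odd i') => /=; last by rewrite eqSS.
by case: (val j == i'.+2).
Qed.

Lemma partner_lt g (i : 'I_(2 * g)) : (partner i < 2 * g)%N.
Proof.
rewrite /partner; case oi: (odd i).
  by apply: (leq_ltn_trans (leq_pred _)).
have := ltn_ord i; rewrite leq_eqVlt => /orP [/eqP h|//].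
by have := congr1 odd h; rewrite /= oddM /= oi.
Qed.

Lemma partnerK i : partner (partner i) = i.
Proof.
rewrite /partner; case: i => [|i] //=.
by case oi: (odd i) => //=; rewrite oi.
Qed.

Lemma odd_partner i : odd (partner i) = ~~ odd i.
Proof. rewrite /partner; case: i => [|i] //=; by case oi: (odd i) => //=; rewrite oi. Qed.

Lemma JJ g : Jmx g *m Jmx g = - 1%:M.
Proof.
apply/matrixP => i k; rewrite !mxE.
pose p : 'I_(2 * g) := Ordinal (partner_lt i).
rewrite (bigD1 p) //= big1 ?addr0; last first.
  by move=> j hj; rewrite JE; case: eqP => [h|]; [case/eqP: hj; apply: val_inj|]; rewrite ?mul0r.
rewrite !JE /= eqxx partnerK /sgnJ odd_partner eq_sym.
have [->|nik] := eqVneq i k; rewrite ?eqxx ?(negbTE nik); case: (odd _); rewrite /= ?mulr0 ?mul1r ?mulN1r ?mulr1 ?opprK ?oppr0 //; have nik2 : (val i == val k) = false by apply/negbTE; rewrite (inj_eq val_inj).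
all: by rewrite ?nik2 ?oppr0.
Qed.

Lemma J_unit g : Jmx g \in unitmx.
Proof.
have h : Jmx g *m (- Jmx g) = 1%:M by rewrite mulmxN JJ opprK.
by case: (mulmx1_unit h).
Qed.

Lemma coord_uniq (A : lmodType rat) n (b : 'I_n -> A) (c d : 'I_n -> rat) :
  is_Qbasis b -> \sum_i c i *: b i = \sum_i d i *: b i -> forall i, c i = d i.
Proof.
move=> [ind _] e i; apply/eqP; rewrite -subr_eq0; apply/eqP.
apply: (ind (fun i => c i - d i)) => //.
under eq_bigr do rewrite scalerBl.
by rewrite sumrB e subrr.
Qed.

Lemma rF0 : ratF 0 = 0.
Proof. by rewrite /ratF /polyF polyC0 tofrac0. Qed.

Lemma expand_l (A : lmodType rat) (phi : A -> A -> Qt) n (F : 'I_n -> rat) (v : 'I_n -> A) c :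
  (forall a1 a2 c, eqmodL (phi (a1 + a2) c) (phi a1 c + phi a2 c)) ->
  (forall r a c, eqmodL (phi (r *: a) c) (ratF r * phi a c)) ->
  eqmodL (phi (\sum_l F l *: v l) c) (\sum_l ratF (F l) * phi (v l) c).
Proof.
move=> hadd hsc.
elim/big_rec2: _ => [|i y1 y2 _ IH].
  by have := hsc 0 0 c; rewrite scale0r rF0 mul0r.
apply: eqm_trans (hadd _ _ _) _; apply: eqmD IH; exact: hsc.
Qed.

Lemma expand_r (A : lmodType rat) (phi : A -> A -> Qt) n (F : 'I_n -> rat) (v : 'I_n -> A) a :
  (forall a c1 c2, eqmodL (phi a (c1 + c2)) (phi a c1 + phi a c2)) ->
  (forall r a c, eqmodL (phi a (r *: c)) (ratF r * phi a c)) ->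
  eqmodL (phi a (\sum_l F l *: v l)) (\sum_l ratF (F l) * phi a (v l)).
Proof.
move=> hadd hsc.
elim/big_rec2: _ => [|i y1 y2 _ IH].
  by have := hsc 0 a 0; rewrite scale0r rF0 mul0r.
apply: eqm_trans (hadd _ _ _) _; apply: eqmD IH; exact: hsc.
Qed.

Lemma seifertE g (V : 'M[rat]_(2 * g)) : V \in unitmx ->
  seifert_presF V = pm (char_poly_mx (V^T *m invmx V)) *m map_mx rF V.
Proof.
move=> hV; rewrite rF_pm -map_mxM /char_poly_mx mulmxBl mul_scalar_mx -map_mxM mulmxKV //.
by apply/matrixP => i j; rewrite !mxE /tF /ratF /polyF rmorphB rmorphM.
Qed.

Lemma invmxM' (F : fieldType) n (A B : 'M[F]_n) : A \in unitmx -> B \in unitmx ->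
  invmx (A *m B) = invmx B *m invmx A.
Proof.
move=> hA hB.
have h1 : A *m B *m (invmx B *m invmx A) = 1%:M by rewrite mulmxA mulmxK // mulmxV.
have hAB : A *m B \in unitmx by rewrite unitmx_mul hA hB.
by rewrite -[LHS]mulmx1 -h1 mulmxA mulVmx // mul1mx.
Qed.

Lemma sandwich n (P : 'M[rat]_n) (X : 'M[Qt]_n) c k i :
  \sum_l ratF (P l i) * \sum_m ratF (P m k) * (c * X m l) =
  (map_mx rF P^T *m (c *: X) *m map_mx rF P) k i.
Proof.
rewrite mxE; apply: eq_bigr => l _; rewrite [in RHS]mxE mulrC; congr (_ * _).
  by apply: eq_bigr => m _; rewrite !mxE.
by rewrite mxE.
Qed.

Lemma scalemx_entry n (c : Qt) (X : 'M[Qt]_n) k i : c * X k i = (c *: X) k i.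
Proof. by rewrite mxE. Qed.

Lemma sub_entry n (X Y : 'M[Qt]_n) k i : X k i - Y k i = (X - Y) k i.
Proof. by rewrite !mxE. Qed.

Unset Implicit Arguments.
Set Strict Implicit.

Theorem mainTheorem10 (g : nat)
    (V V' : 'M[rat]_(2 * g))
    (A A' : lmodType rat)
    (t : {linear A -> A}) (tinv : A -> A)
    (t' : {linear A' -> A'}) (tinv' : A' -> A')
    (b : 'I_(2 * g) -> A) (b' : 'I_(2 * g) -> A')
    (phi : A -> A -> Qt) (phi' : A' -> A' -> Qt)
    (xi : {linear A -> A'})
    (hVJ : V - V^T = Jmx g) (hVJ' : V' - V'^T = Jmx g)
    (hpres : alex_presentation V t tinv b)
    (hpres' : alex_presentation V' t' tinv' b')
    (hphi : blanchfield_on_gens V t b phi)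
    (hphi' : blanchfield_on_gens V' t' b' phi')
    (hxi_t : forall a, xi (t a) = t' (xi a))
    (hxi_bij : bijective xi)
    (hxi_pres : forall a c, eqmodL (phi' (xi a) (xi c)) (phi a c))
    (hV : V \in unitmx) (hV' : V' \in unitmx) :
  is_Qbasis b /\ is_Qbasis b' /\
  (forall P : 'M[rat]_(2 * g),
     (forall i, xi (b i) = \sum_k P k i *: b' k) ->
     symplectic P /\ V' = P *m V *m P^T).
Proof.
have [bas tb] := BASIS hV hpres; have [bas' tb'] := BASIS hV' hpres'.
split => //; split => // P hP.
set T := V^T *m invmx V in tb; set T' := V'^T *m invmx V' in tb'.
have PT : P *m T = T' *m P.
  apply/matrixP => l i.
  have := hxi_t (b i); rewrite tb hP !linear_sum => e.
  have e1 : \sum_l (P *m T) l i *: b' l = \sum_l (T' *m P) l i *: b' l.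
    rewrite (mx_comb P T b') (mx_comb T' P b').
    transitivity (\sum_j xi (T j i *: b j)).
      by apply: eq_bigr => j _; rewrite linearZ hP.
    by rewrite e; apply: eq_bigr => j _; rewrite linearZ tb'.
  exact: coord_uniq bas' e1 l.
case: hphi => [[addl scl tl] [addr scr tr gens]].
case: hphi' => [[addl' scl' tl' ] [addr' scr' tr' gens']].
pose MF m n := @map_mx _ _ rF m n.
pose Ci := invmx (pm (char_poly_mx T)).
pose Ci' := invmx (pm (char_poly_mx T')).
have Tu : T \in unitmx by rewrite unitmx_mul unitmx_tr unitmx_inv hV.
have T1u : (1%:M - T) \in unitmx.
  have -> : 1%:M - T = Jmx g *m invmx V by rewrite -hVJ mulmxBl mulmxV.
  by rewrite unitmx_mul J_unit unitmx_inv.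
pose W := P^T *m invmx V' *m P - invmx V.
have comm : Ci' *m MF _ _ P = MF _ _ P *m Ci.
  have h : pm (char_poly_mx T') *m MF _ _ P = MF _ _ P *m pm (char_poly_mx T).
    rewrite /MF rF_pm -!map_mxM; congr (map_mx _ _).
    rewrite /char_poly_mx mulmxBl mulmxBr mul_scalar_mx mul_mx_scalar -!map_mxM PT.
    by [].
  rewrite -[LHS]mulmx1 -(mulmxV (char_polyF_unit T)) mulmxA -[Ci' *m _ *m _]mulmxA -h.
  by rewrite mulmxA mulVmx ?char_polyF_unit // mul1mx.
have Mq V0 : V0 \in unitmx -> invmx (seifert_presF V0) =
    MF _ _ (invmx V0) *m invmx (pm (char_poly_mx (V0^T *m invmx V0))).
  move=> hV0; rewrite seifertE // invmxM' ?char_polyF_unit ?map_unitmx //.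
  by rewrite /MF map_invmx.
have key k i : isLaurent (((1 - tF) *: MF _ _ W *m Ci) k i).
  have e1 : eqmodL (phi' (xi (b i)) (xi (b k)))
     (\sum_l ratF (P l i) * \sum_m ratF (P m k) *
         ((1 - tF) * invmx (seifert_presF V') m l)).
    rewrite hP; apply: eqm_trans (expand_l _ _ _ addl' scl') _.
    apply: eqm_sum => l _; apply: eqmM; first exact: LrF.
    rewrite hP; apply: eqm_trans (expand_r _ _ _ addr' scr') _.
    apply: eqm_sum => m _; apply: eqmM; first exact: LrF.
    exact: gens'.
  have e2 := eqm_trans (eqm_sym e1) (eqm_trans (hxi_pres _ _) (gens i k)).
  move: e2; rewrite /eqmodL.
  congr isLaurent.
  rewrite Mq // Mq // -/T -/T' -/Ci -/Ci'.
  rewrite sandwich (scalemx_entry (1 - tF) (MF _ _ (invmx V) *m Ci)) sub_entry.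
  congr (fun M : 'M_(2 * g) => M k i).
  have eW : MF _ _ W = map_mx rF P^T *m MF _ _ (invmx V') *m MF _ _ P - MF _ _ (invmx V).
    by rewrite /W /MF map_mxB !map_mxM.
  rewrite eW -scalemxAl mulmxBl scalerBr; congr (_ - _).
  rewrite -scalemxAr -scalemxAl; congr (_ *: _).
  by rewrite -!mulmxA comm.
have W0 := FINAL Tu T1u key.
have eq1 : P^T *m invmx V' *m P = invmx V.
  by apply/eqP; rewrite -subr_eq0 -/W W0.
have Pu : P \in unitmx.
  have : invmx V \in unitmx by rewrite unitmx_inv.
  by rewrite -eq1 unitmx_mul => /andP [_ ->].
set X := P *m V *m P^T.
have hX : X = V'.
  have eq1' := eq1; rewrite -mulmxA in eq1'.
  have h : X *m invmx V' *m P = P.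
    by rewrite /X -!mulmxA eq1' mulmxV // mulmx1.
  have h2 : X *m invmx V' = 1%:M.
    by rewrite -[LHS](mulmxK Pu) h mulmxV.
  by rewrite -(mulmxKV hV' X) h2 mul1mx.
split; last by rewrite hX.
rewrite /symplectic; transitivity (V' - V'^T); last exact: hVJ'.
by rewrite -hVJ -hX /X mulmxBr mulmxBl !trmx_mul trmxK !mulmxA.
Qed.
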